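(* There is an absolute constant $C_2$ such that for all $p\in(0,0.1)$, with $q=-\log(1-p)$ and $B=\lfloor q^{-1}\log q^{-1}\rfloor$, we have $B\,g(Bq/2)\le C_2\log q^{-1}$.
   Context: $\beta(u)=\frac{u+\sqrt{u(4-3u)}}{2}$ and $g(z)=-\log\beta(1-e^{-z})$ for $z>0$. *)

(* Defs.v *)
From Stdlib Require Import Reals.
Open Scope R_scope.

Definition beta (u : R) : R := (u + sqrt (u * (4 - 3 * u))) / 2.

Definition g (z : R) : R := - ln (beta (1 - exp (- z))).

(* Main.v *)
Require Import Defs.
From Stdlib Require Import Reals Lra Lia Psatz.
Open Scope R_scope.

Lemma ln_le' x y : 0 < x -> x <= y -> ln x <= ln y.
Proof. intros H1 [H|H]. left; apply ln_increasing; auto. subst; lra. Qed.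

Lemma exp_le' x y : x <= y -> exp x <= exp y.
Proof. intros [H|H]. left; apply exp_increasing; auto. subst; lra. Qed.

Lemma ln_le_sub1 t : 0 < t -> ln t <= t - 1.
Proof.
  intros Ht. pose proof (exp_ineq1_le (t-1)).
  rewrite <- (ln_exp (t-1)). apply ln_le'; lra.
Qed.

Lemma g_bound z : 0 < z -> exp (-(2*z)) <= / 2 -> g z <= 2 * exp (-(2*z)).
Proof.
  intros Hz Hy.
  set (ee := exp (- z)).
  assert (He0 : 0 < ee) by apply exp_pos.
  assert (He1 : ee < 1).
  { unfold ee. rewrite <- exp_0. apply exp_increasing. lra. }
  assert (Hy' : exp (-(2*z)) = ee*ee).
  { unfold ee. rewrite <- exp_plus. f_equal. lra. }
  rewrite Hy' in *. unfold g. fold ee.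
  set (y := ee*ee).
  assert (Hb : 1 - y <= beta (1 - ee)).
  { unfold beta.
    assert (1 + ee - 2*y <= sqrt ((1-ee) * (4 - 3*(1-ee)))).
    { destruct (Rle_or_lt (1 + ee - 2*y) 0) as [H|H].
      - pose proof (sqrt_pos ((1-ee) * (4 - 3*(1-ee)))); lra.
      - rewrite <- (sqrt_square (1 + ee - 2*y)) by lra.
        apply sqrt_le_1_alt. unfold y. nra. }
    unfold y in *; lra. }
  assert (Hy0 : 0 < y) by (unfold y; nra).
  assert (Hyh : y <= / 2) by (unfold y; lra). clearbody y.
  assert (Hl : ln (1 - y) <= ln (beta (1 - ee))) by (apply ln_le'; lra).
  assert (Hl2 : - ln (1-y) <= / (1 - y) - 1).
  { rewrite <- ln_Rinv by lra. apply ln_le_sub1. apply Rinv_0_lt_compat; lra. }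
  assert (/ (1 - y) - 1 <= 2*y).
  { assert (/ (1-y) <= 2 ) .
    { rewrite <- (Rinv_inv 2). apply Rinv_le_contravar; lra. }
    assert (/ (1-y) - 1 = y * / (1-y)) by (field; lra).
    nra. }
  lra.
Qed.

Lemma Int_part_nonneg r : 0 <= r -> 0 <= IZR (Int_part r).
Proof.
  intros Hr. destruct (base_Int_part r) as [H1 H2].
  apply IZR_le. assert (-1 < Int_part r)%Z by (apply lt_IZR; lra). lia.
Qed.

Theorem lemma10 :
  exists C2 : R, forall p : R, 0 < p < / 10 ->
    let q := - ln (1 - p) in
    let B := IZR (Int_part (/ q * ln (/ q))) in
    B * g (B * q / 2) <= C2 * ln (/ q).
Proof.
  exists 4. intros p Hp q B.
  assert (Heq : exp q = / (1 - p)).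
  { unfold q. rewrite exp_Ropp, exp_ln by lra. reflexivity. }
  assert (Hinv : / (1-p) < 10/9).
  { assert (/ (1-p) * (1-p) = 1) by (field; lra).
    apply Rmult_lt_reg_r with (1-p); [lra|]. nra. }
  assert (Hinv1 : 1 < / (1-p)).
  { assert (/ (1-p) * (1-p) = 1) by (field; lra).
    apply Rmult_lt_reg_r with (1-p); [lra|]. nra. }
  assert (Hq0 : 0 < q).
  { apply exp_lt_inv. rewrite exp_0, Heq. lra. }
  assert (Hq1 : q < 1/9).
  { pose proof (exp_ineq1_le q). lra. }
  set (L := ln (/ q)).
  assert (HL : 1 <= L).
  { unfold L. rewrite <- (ln_exp 1). apply ln_le'. apply exp_pos.
    pose proof exp_le_3.
    assert (9 < / q).
    { assert (/ q * q = 1) by (field; lra).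
      apply Rmult_lt_reg_r with q; [lra|]. nra. }
    lra. }
  set (x := / q * L).
  assert (Hxq : x * q = L) by (unfold x; field; lra).
  destruct (base_Int_part x) as [HB1 HB2]. change (IZR (Int_part x)) with B in HB1, HB2.
  assert (HB0 : 0 <= B).
  { unfold B. apply Int_part_nonneg. unfold x.
    apply Rmult_le_pos; [left; apply Rinv_0_lt_compat; exact Hq0 | fold L; lra]. }
  assert (HlnL : ln q = - L) by (unfold L; rewrite ln_Rinv by lra; ring).
  clearbody B x L q.
  assert (HBq : L - q < B * q) by (assert (0 < (B - x + 1) * q) by (apply Rmult_lt_0_compat; lra); nra).
  assert (Hz : 0 < B * q / 2) by lra.
  assert (Hy : exp (-(2 * (B * q / 2))) <= q * / (1-p)).
  { rewrite <- Heq. replace (q * exp q) with (exp (ln q) * exp q) by (rewrite exp_ln by lra; ring).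
    rewrite <- exp_plus. apply exp_le'. lra. }
  assert (Hy2 : q * / (1-p) <= / 2) by nra.
  pose proof (g_bound _ Hz ltac:(lra)).
  assert (B * g (B*q/2) <= B * (2 * (q * / (1-p)))) by nra.
  assert (B * q <= L) by nra.
  nra.
Qed.
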